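(* Assume the semi-classical setting described in the context, with polynomials $W\not\equiv 0$, $V$, $U$ such that $W f' = 2Vf + U$. For $n\ge 1$ define the formal Laurent series (in powers of $z$, finitely many positive powers) $$\Theta_n = W\,(\varepsilon_n p_n' - \varepsilon_n' p_n) + 2V\varepsilon_n p_n,\qquad \Omega_n = a_n W\,(\varepsilon_{n-1}p_n' - \varepsilon_n' p_{n-1}) + a_n V\,(\varepsilon_{n-1}p_n + \varepsilon_n p_{n-1}).$$ Then $\Theta_n$ and $\Omega_n$ are polynomials in $z$ (all coefficients of negative powers of $z$ vanish), $\deg\Theta_n\le \max(\deg W-2,\deg V-1)$, and $\deg \Omega_n\le\max(\deg W-1,\deg V)$. Moreover, $\Theta_n = W\,[p_{n-1}^{(1)\prime}p_n - p_n' p_{n-1}^{(1)}] - 2V p_{n-1}^{(1)}p_n - U p_n^2$. If in addition $W(z)=\prod_{k=1}^m (z-x_k)$ with $m\ge 2$ and $2V(z) = W(z)\sum_{k=1}^m \alpha_k/(z-x_k)$, then $$\Theta_n(z) = \Big(2n+1+\sum_{k=1}^m\alpha_k\Big)z^{m-2} + (\text{lower powers}),\qquad \Omega_n(z) = \Big(n+\tfrac12\sum_{k=1}^m\alpha_k\Big)z^{m-1} + (\text{lower powers}).$$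
   Context: Let $(\mu_k)_{k\ge 0}$ be complex numbers such that all Hankel determinants $\det(\mu_{i+j})_{0\le i,j\le n}$, $n\ge 0$, are nonzero. Let $\mathcal L$ be the linear functional on polynomials with $\mathcal L(x^k)=\mu_k$, and let $p_n(z)=\gamma_n z^n+\cdots$ ($\gamma_n\neq 0$) be the orthonormal polynomials: $\mathcal L(p_np_m)=\delta_{n,m}$. They satisfy $a_{n+1}p_{n+1}(z)=(z-b_n)p_n(z)-a_np_{n-1}(z)$ ($n\ge0$, $p_{-1}=0$) with $a_n=\gamma_{n-1}/\gamma_n$. Let $f(z)=\sum_{k\ge0}\mu_k z^{-k-1}$ (formal series in $1/z$). For $n\ge0$ let $p^{(1)}_{n-1}$ be the polynomial part of $f p_n$ and $\varepsilon_n = f p_n - p^{(1)}_{n-1}$, a formal series of the form $\gamma_n^{-1}z^{-n-1}+O(z^{-n-2})$. Primes denote $d/dz$. The setting is semi-classical if there are polynomials $W\not\equiv0$, $V$, $U$ with $Wf'=2Vf+U$ (as formal series). *)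

(* Defs.v *)
From HB Require Import structures.
From mathcomp Require Import all_boot all_order all_algebra.
Set Implicit Arguments. Unset Strict Implicit. Unset Printing Implicit Defensive.
Import Order.TTheory GRing.Theory Num.Theory.
Local Open Scope ring_scope.

Section Defs.
Variable C : numClosedFieldType.

(* A formal Laurent series  sum_k s k z^k  is represented by its coefficient
   function s : int -> C.  All series used here have finitely many positive
   powers; the only products needed are polynomial * series, which are always
   finite sums. *)
Definition lser := int -> C.

Definition ofpoly (q : {poly C}) : lser :=
  fun k => match k with Posz i => q`_i | Negz _ => 0 end.

(* f(z) = sum_{j>=0} mu_j z^{-j-1}  (Negz j = -(j+1)) *)
Definition fser (mu : nat -> C) : lser :=
  fun k => match k with Posz _ => 0 | Negz j => mu j end.

Definition pmul (q : {poly C}) (s : lser) : lser :=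
  fun k => \sum_(i < size q) q`_i * s (k - (i%:Z)).

Definition sderiv (s : lser) : lser := fun k => (k + 1)%:~R * s (k + 1).

Definition sadd (s t : lser) : lser := fun k => s k + t k.
Definition ssub (s t : lser) : lser := fun k => s k - t k.
Definition sscale (c : C) (s : lser) : lser := fun k => c * s k.

(* the polynomial with coefficients s_0, ..., s_{N-1}; this is the polynomial
   part of s whenever s has no nonzero coefficient of z^k for k >= N *)
Definition ppart (N : nat) (s : lser) : {poly C} := \poly_(i < N) s (Posz i).

Definition Lfun (mu : nat -> C) (q : {poly C}) : C :=
  \sum_(i < size q) q`_i * mu i.

Definition hankel (mu : nat -> C) (n : nat) : C :=
  \det (\matrix_(i < n.+1, j < n.+1) mu (i + j)%N).

(* p^{(1)}_{n-1} := polynomial part of f p_n (f has only negative powers,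
   so f p_n has no power z^k with k >= size p_n) *)
Definition passoc (mu : nat -> C) (pn : {poly C}) : {poly C} :=
  ppart (size pn) (pmul pn (fser mu)).

Definition epsn (mu : nat -> C) (pn : {poly C}) : lser :=
  ssub (pmul pn (fser mu)) (ofpoly (passoc mu pn)).

Definition acoef (p : nat -> {poly C}) (n : nat) : C :=
  lead_coef (p n.-1) / lead_coef (p n).

Definition Theta (mu : nat -> C) (p : nat -> {poly C}) (W V : {poly C})
    (n : nat) : lser :=
  sadd (pmul W (ssub (pmul (p n)^`() (epsn mu (p n)))
                     (pmul (p n) (sderiv (epsn mu (p n))))))
       (pmul (2%:R *: V) (pmul (p n) (epsn mu (p n)))).

Definition Omega (mu : nat -> C) (p : nat -> {poly C}) (W V : {poly C})
    (n : nat) : lser :=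
  sadd (sscale (acoef p n)
          (pmul W (ssub (pmul (p n)^`() (epsn mu (p n.-1)))
                        (pmul (p n.-1) (sderiv (epsn mu (p n)))))))
       (sscale (acoef p n)
          (pmul V (sadd (pmul (p n) (epsn mu (p n.-1)))
                        (pmul (p n.-1) (epsn mu (p n)))))).

(* degree with deg 0 = -1 (only used in bounds "coefficient of z^k vanishes
   for k > bound", where this convention is harmless) *)
Definition degz (q : {poly C}) : int := (size q)%:Z - 1.

End Defs.

(* Main.v *)
Require Import Defs.
From HB Require Import structures.
From mathcomp Require Import all_boot all_order all_algebra.
From mathcomp Require Import zify ring lra.
From Stdlib Require Import FunctionalExtensionality.
Import Order.TTheory GRing.Theory Num.Theory.
Local Open Scope ring_scope.
Set Implicit Arguments. Unset Strict Implicit.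

Section Ser.
Variable C : numClosedFieldType.
Implicit Types (q r : {poly C}) (s t : lser C).

Lemma pmulE q s k N : (size q <= N)%N ->
  pmul q s k = \sum_(i < N) q`_i * s (k - i%:Z).
Proof.
move=> hN; rewrite /pmul (big_ord_widen N (fun i => q`_i * s (k - i%:Z)) hN).
rewrite [RHS](bigID (fun i : 'I_N => (i < size q)%N)) /= [X in _ = _ + X]big1 ?addr0 //.
by move=> i; rewrite -leqNgt => h; rewrite nth_default // mul0r.
Qed.

Lemma pmulD q r s : pmul (q + r) s = sadd (pmul q s) (pmul r s).
Proof.
apply: functional_extensionality => k; rewrite /sadd.
set N := maxn (size q) (size r).
have hq : (size q <= N)%N by rewrite leq_maxl.
have hr : (size r <= N)%N by rewrite leq_maxr.
have hqr : (size (q + r)%R <= N)%N by apply: leq_trans (size_polyD _ _) _; rewrite geq_max hq hr.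
rewrite (pmulE _ _ hq) (pmulE _ _ hr) (pmulE _ _ hqr) -big_split /=.
by apply: eq_bigr => i _; rewrite coefD mulrDl.
Qed.

Lemma pmulZ c q s : pmul (c *: q) s = sscale c (pmul q s).
Proof.
apply: functional_extensionality => k; rewrite /sscale.
rewrite (pmulE _ _ (size_scale_leq c q)) /pmul big_distrr /=.
by apply: eq_bigr => i _; rewrite coefZ mulrA.
Qed.

Lemma pmul0 s : pmul 0 s = fun _ => 0.
Proof. by apply: functional_extensionality => k; rewrite /pmul size_poly0 big_ord0. Qed.

Lemma pmulN q s : pmul (- q) s = sscale (-1) (pmul q s).
Proof. by rewrite -scaleN1r pmulZ. Qed.

Lemma pmulC c s : pmul c%:P s = sscale c s.
Proof.
apply: functional_extensionality => k; rewrite /sscale (pmulE _ _ (size_polyC_leq1 c)).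
by rewrite big_ord1 coefC /= subr0.
Qed.

Lemma pmulX q s k : pmul (q * 'X) s k = pmul q s (k - 1).
Proof.
have hs : (size (q * 'X)%R <= (size q).+1)%N.
  by rewrite (leq_trans (size_polyMleq _ _)) // size_polyX addn2.
rewrite (pmulE _ _ hs) big_ord_recl coefMX /= mul0r add0r /pmul.
apply: eq_bigr => i _; rewrite coefMX /= /bump /=; congr (_ * s _); lia.
Qed.

Lemma pmul_sadd q s t : pmul q (sadd s t) = sadd (pmul q s) (pmul q t).
Proof.
apply: functional_extensionality => k; rewrite /pmul /sadd -big_split /=.
by apply: eq_bigr => i _; rewrite mulrDr.
Qed.

Lemma pmul_sscale q c s : pmul q (sscale c s) = sscale c (pmul q s).
Proof.
apply: functional_extensionality => k; rewrite /pmul /sscale big_distrr /=.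
by apply: eq_bigr => i _; rewrite mulrCA.
Qed.

Lemma pmul_ssub q s t : pmul q (ssub s t) = ssub (pmul q s) (pmul q t).
Proof.
apply: functional_extensionality => k; rewrite /pmul /ssub -sumrB /=.
by apply: eq_bigr => i _; rewrite mulrBr.
Qed.

Lemma pmulA q r s : pmul (q * r) s = pmul q (pmul r s).
Proof.
elim/poly_ind: q => [|q c IH]; first by rewrite mul0r !pmul0.
apply: functional_extensionality => k.
rewrite mulrDl mulrAC mul_polyC pmulD pmulZ /sadd /sscale pmulX IH.
by rewrite pmulD /sadd pmulX pmulC.
Qed.

Lemma ofpoly0 : ofpoly 0 = (fun _ => 0 : C).
Proof. by apply: functional_extensionality => -[i|i] //=; rewrite coef0. Qed.

Lemma pmul_ofpoly q r : pmul q (ofpoly r) = ofpoly (q * r).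
Proof.
elim/poly_ind: q => [|q c IH]; first by rewrite mul0r pmul0 ofpoly0.
apply: functional_extensionality => k.
rewrite pmulD /sadd pmulX IH pmulC /sscale mulrDl mulrAC mul_polyC.
case: k => [i|i] /=; last by rewrite mulr0 addr0; case: i.
rewrite coefD coefMX coefZ; case: i => [|i] //=.
by rewrite subn1.
Qed.

Lemma ofpolyD q r : ofpoly (q + r) = sadd (ofpoly q) (ofpoly r).
Proof. by apply: functional_extensionality => -[i|i] /=; rewrite /sadd ?coefD ?addr0. Qed.
Lemma ofpolyB q r : ofpoly (q - r) = ssub (ofpoly q) (ofpoly r).
Proof. by apply: functional_extensionality => -[i|i] /=; rewrite /ssub ?coefB ?subr0. Qed.

Lemma sderiv_sadd s t : sderiv (sadd s t) = sadd (sderiv s) (sderiv t).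
Proof. by apply: functional_extensionality => k; rewrite /sderiv /sadd mulrDr. Qed.
Lemma sderiv_ssub s t : sderiv (ssub s t) = ssub (sderiv s) (sderiv t).
Proof. by apply: functional_extensionality => k; rewrite /sderiv /ssub mulrBr. Qed.
Lemma sderiv_sscale c s : sderiv (sscale c s) = sscale c (sderiv s).
Proof. by apply: functional_extensionality => k; rewrite /sderiv /sscale mulrCA. Qed.

Lemma sderiv_pmul q s : sderiv (pmul q s) = sadd (pmul q^`() s) (pmul q (sderiv s)).
Proof.
elim/poly_ind: q => [|q c IH].
  by rewrite deriv0 !pmul0; apply: functional_extensionality => k; rewrite /sderiv /sadd mulr0 addr0.
apply: functional_extensionality => k.
rewrite derivMXaddC (pmulD (q * 'X) _ s) sderiv_sadd pmulC sderiv_sscale !pmulD pmulC /sadd /sscale.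
have IHk := congr1 (fun f => f (k - 1)) IH; rewrite /sadd /= in IHk.
rewrite !pmulX -addrA [X in _ = _ + X]addrA -IHk /sderiv.
rewrite pmulX.
have -> : (k + 1 - 1 = k)%R by lia.
have -> : (k - 1 + 1 = k)%R by lia.
rewrite intrD; ring.
Qed.

Lemma sderiv_ofpoly q : sderiv (ofpoly q) = ofpoly q^`().
Proof.
apply: functional_extensionality => -[i|i]; rewrite /sderiv /=.
  have -> : (Posz i + 1 = Posz i.+1)%R by lia.
  by rewrite coef_deriv /= mulr_natl addn1.
case: i => [|i] /=.
  have -> : (Negz 0 + 1 = 0)%R by lia.
  by rewrite mul0r.
have -> : (Negz i.+1 + 1 = Negz i)%R by lia.
by rewrite mulr0.
Qed.

Lemma ofpolyZ x q : ofpoly (x *: q) = sscale x (ofpoly q).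
Proof. by apply: functional_extensionality => -[i|i] /=; rewrite /sscale ?coefZ ?mulr0. Qed.
Lemma ofpolyN q : ofpoly (- q) = sscale (-1) (ofpoly q).
Proof. by rewrite -scaleN1r ofpolyZ. Qed.

Variable mu : nat -> C.
Local Notation f := (fser mu).

Definition NF a b c : lser C := sadd (pmul a f) (sadd (pmul c (sderiv f)) (ofpoly b)).

Lemma NF_pmul q a b c : pmul q (NF a b c) = NF (q * a) (q * b) (q * c).
Proof. by rewrite /NF !pmul_sadd !pmulA pmul_ofpoly. Qed.

Lemma NF_add a b c a' b' c' :
  sadd (NF a b c) (NF a' b' c') = NF (a + a') (b + b') (c + c').
Proof.
rewrite /NF !pmulD ofpolyD; apply: functional_extensionality => k; rewrite /sadd; ring.
Qed.

Lemma NF_sub a b c a' b' c' :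
  ssub (NF a b c) (NF a' b' c') = NF (a - a') (b - b') (c - c').
Proof.
rewrite /NF !pmulD !pmulN ofpolyD ofpolyN.
apply: functional_extensionality => k; rewrite /sadd /ssub /sscale; ring.
Qed.

Lemma NF_scale x a b c :
  sscale x (NF a b c) = NF (x%:P * a) (x%:P * b) (x%:P * c).
Proof.
rewrite /NF !mul_polyC !pmulZ ofpolyZ.
apply: functional_extensionality => k; rewrite /sadd /sscale; ring.
Qed.

Lemma NF_deriv a b : sderiv (NF a b 0) = NF a^`() b^`() a.
Proof.
rewrite /NF !sderiv_sadd sderiv_pmul pmul0 sderiv_ofpoly.
apply: functional_extensionality => k; rewrite /sadd /sderiv; ring.
Qed.

Lemma NF_poly b : NF 0 b 0 = ofpoly b.
Proof.
rewrite /NF !pmul0; apply: functional_extensionality => k; rewrite /sadd; ring.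
Qed.

Lemma NF_sc W V U a b c :
  pmul W (sderiv f) = sadd (pmul (2%:R *: V) f) (ofpoly U) ->
  NF a b (W * c) = NF (a + c * (2%:R *: V)) (b + c * U) 0.
Proof.
move=> hsc; rewrite /NF [W * c]mulrC pmulA hsc pmul_sadd -pmulA pmul_ofpoly pmul0 pmulD ofpolyD.
apply: functional_extensionality => k; rewrite /sadd; ring.
Qed.

Lemma epsn_NF pn : epsn mu pn = NF pn (- passoc mu pn) 0.
Proof.
rewrite /epsn /NF pmul0 ofpolyN.
apply: functional_extensionality => k; rewrite /sadd /ssub /sscale; ring.
Qed.


Definition vab (s : lser C) (K : int) := forall k, K < k -> s k = 0.

Lemma vab_pmul q s K N k0 : (size q)%:Z <= N + 1 -> vab s K -> K + N = k0 ->
  vab (pmul q s) k0.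
Proof.
move=> hq hs hk k hk0; rewrite /pmul big1 // => i _.
rewrite hs ?mulr0 //.
have := ltn_ord i; lia.
Qed.

Lemma top_pmul q s K N k0 : (size q <= N.+1)%N -> vab s K -> K + N%:Z = k0 ->
  pmul q s k0 = q`_N * s K.
Proof.
move=> hq hs hk; rewrite (pmulE _ _ hq) big_ord_recr /= big1 ?add0r.
  by congr (_ * s _); lia.
move=> i _; rewrite hs ?mulr0 //; have := ltn_ord i; lia.
Qed.

Lemma vab_sderiv s K : vab s K -> vab (sderiv s) (K - 1).
Proof. by move=> hs k hk; rewrite /sderiv hs ?mulr0 //; lia. Qed.

Lemma top_sderiv s K : sderiv s (K - 1) = K%:~R * s K.
Proof. by rewrite /sderiv; have -> : (K - 1 + 1 = K)%R by lia. Qed.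

Lemma vab_sadd s t K : vab s K -> vab t K -> vab (sadd s t) K.
Proof. by move=> hs ht k hk; rewrite /sadd hs ?ht ?addr0. Qed.
Lemma vab_ssub s t K : vab s K -> vab t K -> vab (ssub s t) K.
Proof. by move=> hs ht k hk; rewrite /ssub hs ?ht ?subr0. Qed.
Lemma vab_sscale x s K : vab s K -> vab (sscale x s) K.
Proof. by move=> hs k hk; rewrite /sscale hs ?mulr0. Qed.
Lemma vab_mono s K K' : K <= K' -> vab s K -> vab s K'.
Proof. by move=> hK hs k hk; apply: hs; lia. Qed.

Lemma LfunE q : Lfun mu q = pmul q f (-1).
Proof.
rewrite /Lfun /pmul; apply: eq_bigr => i _.
by have -> : (-1 - (i : nat)%:Z = Negz i)%R by lia.
Qed.

Lemma Lfun0 : Lfun mu 0 = 0.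
Proof. by rewrite LfunE pmul0. Qed.
Lemma LfunD q r : Lfun mu (q + r) = Lfun mu q + Lfun mu r.
Proof. by rewrite !LfunE pmulD. Qed.
Lemma LfunZ x q : Lfun mu (x *: q) = x * Lfun mu q.
Proof. by rewrite !LfunE pmulZ. Qed.

Lemma pmul_Xn j q s k : pmul ('X^j * q) s k = pmul q s (k - j%:Z).
Proof.
elim: j k => [|j IH] k; first by rewrite expr0 mul1r subr0.
rewrite exprSr mulrAC pmulX IH; congr (pmul _ _ _); lia.
Qed.

Lemma epsn_neg pn j : epsn mu pn (Negz j) = Lfun mu ('X^j * pn).
Proof.
rewrite LfunE pmul_Xn /epsn /ssub /= subr0; congr (pmul _ _ _); lia.
Qed.

Lemma epsn_pos pn i : epsn mu pn (Posz i) = 0.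
Proof.
rewrite /epsn /ssub /= /passoc /ppart coef_poly.
case: ltnP => hi; first by rewrite subrr.
rewrite subr0 /pmul big1 // => j _.
have -> : (Posz i - (j : nat)%:Z = Posz (i - j))%R.
  have := ltn_ord j; lia.
by rewrite /= mulr0.
Qed.


Variable p : nat -> {poly C}.
Hypothesis hsize : forall n, size (p n) = n.+1.
Hypothesis horth : forall n m, Lfun mu (p n * p m) = (n == m)%:R.

Lemma lead_p n : lead_coef (p n) = (p n)`_n.
Proof. by rewrite lead_coefE hsize. Qed.

Lemma lead_p_neq0 n : lead_coef (p n) != 0.
Proof. by rewrite lead_coef_eq0 -size_poly_eq0 hsize. Qed.

Lemma orth_low N n r : (n <= N)%N -> (size r <= n)%N -> Lfun mu (r * p N) = 0.
Proof.
elim: n r => [|n IH] r hn hr.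
  by move: hr; rewrite leqn0 size_poly_eq0 => /eqP ->; rewrite mul0r Lfun0.
set c := r`_n / lead_coef (p n).
have hr' : (size (r - c *: p n)%R <= n)%N.
  apply/leq_sizeP => j hj; rewrite coefB coefZ.
  case: (ltngtP j n) => hjn; first by move: hj; rewrite leqNgt hjn.
    have h1 : (size r <= j)%N by rewrite (leq_trans hr).
    have h2 : (size (p n) <= j)%N by rewrite hsize.
    by rewrite (nth_default _ h1) (nth_default _ h2) mulr0 subr0.
  by rewrite hjn /c -lead_p divfK ?subrr // lead_p_neq0.
have -> : r = (r - c *: p n) + c *: p n by rewrite subrK.
rewrite mulrDl LfunD IH ?(ltnW hn) // add0r -scalerAl LfunZ horth.
by rewrite (ltn_eqF hn) mulr0.
Qed.

Lemma eps_vab N : vab (epsn mu (p N)) (- (N.+1)%:Z).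
Proof.
move=> [i|j] hk; first exact: epsn_pos.
rewrite epsn_neg (orth_low (leqnn N)) // size_polyXn; lia.
Qed.

Lemma eps_top N : lead_coef (p N) * epsn mu (p N) (- (N.+1)%:Z) = 1.
Proof.
have -> : (- (N.+1)%:Z = Negz N)%R by lia.
rewrite epsn_neg.
set g := lead_coef (p N).
have hr : (size (p N - g *: 'X^N)%R <= N)%N.
  apply/leq_sizeP => j hj; rewrite coefB coefZ coefXn.
  case: (ltngtP j N) => hjn; first by move: hj; rewrite leqNgt hjn.
    by rewrite nth_default ?hsize // mulr0 subrr.
  by rewrite hjn ?eqxx mulr1 /g lead_p subrr.
have := horth N N; rewrite eqxx.
have -> : p N * p N = (p N - g *: 'X^N) * p N + g *: ('X^N * p N).
  by rewrite scalerAl -mulrDl subrK.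
by rewrite LfunD (orth_low (leqnn N)) // add0r LfunZ.
Qed.


Lemma p_neq0 n : p n != 0.
Proof. by rewrite -size_poly_eq0 hsize. Qed.

Lemma A_props N :
  let n := N.+1 in let e := epsn mu (p n) in
  let A := ssub (pmul (p n)^`() e) (pmul (p n) (sderiv e)) in
  vab A (-2) /\ A (-2) = (2 * n + 1)%:R.
Proof.
move=> n e A.
have he := @eps_vab n; have ht := @eps_top n.
have hs' : (size (p n)^`() <= N.+1)%N.
  by have := lt_size_deriv (p_neq0 n); rewrite hsize.
have hs : (size (p n) <= N.+2)%N by rewrite hsize.
split.
  apply: vab_ssub.
    apply: (vab_pmul (K := - (n.+1)%:Z) (N := N%:Z)) => //; lia.
  apply: (vab_pmul (K := - (n.+1)%:Z - 1) (N := N.+1%:Z)) => //.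
    by rewrite hsize; lia.
  exact: vab_sderiv.
  lia.
rewrite /A /ssub (top_pmul hs' he); last by rewrite /n; lia.
rewrite (top_pmul hs (vab_sderiv he)); last by rewrite /n; lia.
rewrite top_sderiv coef_deriv -lead_p mulrNz.
move: ht; set g := lead_coef (p n); set c := epsn mu (p n) _ => ht.
rewrite -[g *+ _]mulr_natr.
transitivity ((2 * n + 1)%:R * (g * c)); last by rewrite ht mulr1.
rewrite /n; ring.
Qed.


Lemma B_props n : let B := pmul (p n) (epsn mu (p n)) in
  vab B (-1) /\ B (-1) = 1.
Proof.
move=> B; have he := @eps_vab n; have ht := @eps_top n.
have hs : (size (p n) <= n.+1)%N by rewrite hsize.
split.
  apply: (vab_pmul (K := - (n.+1)%:Z) (N := n%:Z) _ he); last by lia.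
  by rewrite hsize; lia.
by rewrite /B (top_pmul hs he) -?lead_p //; lia.
Qed.

Lemma Y_props N : let n := N.+1 in
  let Y := ssub (pmul (p n)^`() (epsn mu (p N))) (pmul (p N) (sderiv (epsn mu (p n)))) in
  vab Y (-1) /\ acoef p n * Y (-1) = n%:R.
Proof.
move=> n Y.
have he := @eps_vab n; have he1 := @eps_vab N; have ht1 := @eps_top N.
have hs' : (size (p n)^`() <= N.+1)%N.
  by have := lt_size_deriv (p_neq0 n); rewrite hsize.
have hsN : (size (p N) <= N.+1)%N by rewrite hsize.
have v2 : vab (pmul (p N) (sderiv (epsn mu (p n)))) (-3).
  apply: (vab_pmul (K := - (n.+1)%:Z - 1) (N := N%:Z)); last by rewrite /n; lia.
    by rewrite hsize; lia.
  exact: vab_sderiv.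
have v1 : vab (pmul (p n)^`() (epsn mu (p N))) (-1).
  by apply: (vab_pmul (K := - (N.+1)%:Z) (N := N%:Z)) => //; lia.
split; first by apply: vab_ssub => //; apply: vab_mono v2.
rewrite /Y /ssub (v2 (-1)) // subr0 (top_pmul hs' he1); last by lia.
rewrite coef_deriv -lead_p /acoef /=.
move: ht1; set g1 := lead_coef (p N); set g := lead_coef (p n); set c := epsn mu (p N) _ => ht1.
have hg : g != 0 by exact: lead_p_neq0.
rewrite -[g *+ _]mulr_natr.
transitivity (n%:R * (g1 * c) * (g / g)); last by rewrite ht1 divff // !mulr1.
by rewrite /n; field.
Qed.

Lemma Z_props N : let n := N.+1 in
  let Z := sadd (pmul (p n) (epsn mu (p N))) (pmul (p N) (epsn mu (p n))) in
  vab Z 0 /\ acoef p n * Z 0 = 1.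
Proof.
move=> n Z.
have he := @eps_vab n; have he1 := @eps_vab N; have ht1 := @eps_top N.
have hs : (size (p n) <= N.+2)%N by rewrite hsize.
have v2 : vab (pmul (p N) (epsn mu (p n))) (-2).
  by apply: (vab_pmul (K := - (n.+1)%:Z) (N := N%:Z)) => //; [rewrite hsize; lia | rewrite /n; lia].
have v1 : vab (pmul (p n) (epsn mu (p N))) 0.
  by apply: (vab_pmul (K := - (N.+1)%:Z) (N := N.+1%:Z)) => //; [rewrite hsize; lia | lia].
split; first by apply: vab_sadd => //; apply: vab_mono v2.
rewrite /Z /sadd (v2 0) // addr0 (top_pmul hs he1); last by lia.
rewrite -lead_p /acoef /=.
move: ht1; set g1 := lead_coef (p N); set g := lead_coef (p n); set c := epsn mu (p N) _ => ht1.
have hg : g != 0 by exact: lead_p_neq0.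
transitivity ((g1 * c) * (g / g)); last by rewrite ht1 divff // mulr1.
by field.
Qed.


Lemma NF_sc2 W V U a b c c0 :
  pmul W (sderiv f) = sadd (pmul (2%:R *: V) f) (ofpoly U) -> c = W * c0 ->
  NF a b c = NF (a + c0 * (2%:R *: V)) (b + c0 * U) 0.
Proof. by move=> hsc ->; apply: NF_sc. Qed.

Lemma NF_poly2 a b : a = 0 -> NF a b 0 = ofpoly b.
Proof. by move=> ->; apply: NF_poly. Qed.

Lemma Theta_poly W V U n :
  pmul W (sderiv f) = sadd (pmul (2%:R *: V) f) (ofpoly U) ->
  Theta mu p W V n =
          ofpoly (W * ((passoc mu (p n))^`() * p n - (p n)^`() * passoc mu (p n))
                  - 2%:R *: V * passoc mu (p n) * p n - U * (p n) ^+ 2).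
Proof.
move=> hsc.
rewrite /Theta !epsn_NF NF_deriv !NF_pmul NF_sub NF_pmul NF_add.
rewrite (NF_sc2 _ _ (c0 := - (p n * p n)) hsc); last by ring.
rewrite NF_poly2; last by ring.
congr ofpoly; ring.
Qed.

Lemma Omega_poly W V U N :
  pmul W (sderiv f) = sadd (pmul (2%:R *: V) f) (ofpoly U) ->
  exists b, Omega mu p W V N.+1 = ofpoly b.
Proof.
move=> hsc; eexists.
rewrite /Omega !epsn_NF NF_deriv !NF_pmul NF_sub NF_add !NF_pmul !NF_scale NF_add.
rewrite (NF_sc2 _ _ (c0 := - ((acoef p N.+1)%:P * p N * p N.+1)) hsc); last by ring.
apply: NF_poly2.
by rewrite scaler_nat mulr2n; ring.
Qed.

End Ser.

Unset Implicit Arguments.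
Set Strict Implicit.

Theorem mainTheorem1 (C : numClosedFieldType) (mu : nat -> C)
    (p : nat -> {poly C}) (W V U : {poly C}) :
  (forall n, hankel mu n != 0) ->
  (forall n, size (p n) = n.+1) ->
  (forall n m, Lfun mu (p n * p m) = (n == m)%:R) ->
  W != 0 ->
  pmul W (sderiv (fser mu)) = sadd (pmul (2%:R *: V) (fser mu)) (ofpoly U) ->
  forall n : nat, (1 <= n)%N ->
    [/\ (forall k : int, k < 0 -> Theta mu p W V n k = 0) /\
        (forall k : int, Num.max (degz W - 2) (degz V - 1) < k ->
                         Theta mu p W V n k = 0),
        (forall k : int, k < 0 -> Omega mu p W V n k = 0) /\
        (forall k : int, Num.max (degz W - 1) (degz V) < k ->
                         Omega mu p W V n k = 0),
        Theta mu p W V n =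
          ofpoly (W * ((passoc mu (p n))^`() * p n - (p n)^`() * passoc mu (p n))
                  - 2%:R *: V * passoc mu (p n) * p n - U * (p n) ^+ 2)
      & forall (m : nat) (x alpha : 'I_m -> C),
          (2 <= m)%N ->
          W = \prod_(k < m) ('X - (x k)%:P) ->
          2%:R *: V = \sum_(k < m) alpha k *: \prod_(j < m | j != k) ('X - (x j)%:P) ->
          [/\ Theta mu p W V n (m%:Z - 2) = (2 * n + 1)%:R + \sum_(k < m) alpha k,
              (forall k : int, m%:Z - 2 < k -> Theta mu p W V n k = 0),
              Omega mu p W V n (m%:Z - 1) = n%:R + (\sum_(k < m) alpha k) / 2%:R
            & (forall k : int, m%:Z - 1 < k -> Omega mu p W V n k = 0)]].
Proof.
move=> _ hsize horth hW hsc [//|N] _.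
have [vA tA] := A_props hsize horth N.
have [vB tB] := B_props hsize horth N.+1.
have [vY tY] := Y_props hsize horth N.
have [vZ tZ] := Z_props hsize horth N.
have hTh := Theta_poly p N.+1 hsc.
have [b hOm] := Omega_poly p N hsc.
have h2 : (2%:R : C) != 0 by rewrite pnatr_eq0.
have hV2 : size (2%:R *: V) = size V by rewrite size_scale.
have hWs : (size W)%:Z <= degz W + 1 by rewrite /degz; lia.
have hVs : (size (2%:R *: V))%:Z <= degz V + 1 by rewrite hV2 /degz; lia.
have hVs' : (size V)%:Z <= degz V + 1 by rewrite /degz; lia.
split.
- split.
    move=> k hk; rewrite hTh; case: k hk => [i|i] //=; lia.
  move=> k; rewrite gt_max => /andP[h1 h3].
  rewrite /Theta /sadd (vab_pmul (k0 := degz W - 2) hWs vA _ h1); last by lia.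
  by rewrite (vab_pmul (k0 := degz V - 1) hVs vB _ h3) ?addr0 //; lia.
- split.
    move=> k hk; rewrite hOm; case: k hk => [i|i] //=; lia.
  move=> k; rewrite gt_max => /andP[h1 h3].
  rewrite /Omega /sadd /sscale /= (vab_pmul (k0 := degz W - 1) hWs vY _ h1); last by lia.
  by rewrite (vab_pmul (k0 := degz V) hVs' vZ _ h3) ?mulr0 ?addr0 //; lia.
- exact: hTh.
move=> m x alpha hm hWm hVm.
have hWmon : W \is monic by rewrite hWm monic_prod_XsubC.
have hWsz : size W = m.+1.
  by rewrite hWm size_prod_XsubC /index_enum /= -enumT size_enum_ord.
have hWm1 : W`_m = 1 by have /monicP := hWmon; rewrite lead_coefE hWsz.
pose G k := \prod_(j < m | j != k) ('X - (x j)%:P).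
have hG k : size (G k) = m /\ (G k)`_m.-1 = 1.
  have hGmon : G k \is monic by rewrite monic_prod_XsubC.
  have hWG : W = ('X - (x k)%:P) * G k by rewrite hWm (bigD1 k).
  have hsG : size (G k) = m.
    move: hWsz; rewrite hWG size_mul ?polyXsubC_eq0 ?monic_neq0 // size_XsubC.
    by case.
  split=> //; have /monicP := hGmon; by rewrite lead_coefE hsG.
have hV2c : (2%:R *: V)`_m.-1 = \sum_(k < m) alpha k.
  rewrite hVm coef_sum; apply: eq_bigr => k _.
  by rewrite coefZ (proj2 (hG k)) mulr1.
have hV2sz : (size (2%:R *: V) <= m)%N.
  rewrite hVm; apply/leq_sizeP => j hj; rewrite coef_sum big1 // => k _.
  by rewrite coefZ nth_default ?mulr0 // (proj1 (hG k)).
have hVc : V`_m.-1 = (\sum_(k < m) alpha k) / 2%:R.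
  by rewrite -hV2c coefZ [2%:R * _]mulrC mulfK.
have hVsz : (size V <= m)%N by rewrite -hV2.
have hm1 : m = m.-1.+1 by case: m hm {hWsz hWm hVm x alpha hWm1 hV2c hVc hVsz hV2sz G hG}.
split.
- rewrite /Theta /sadd (top_pmul (N := m) (K := -2) _ vA); [|by rewrite hWsz|lia].
  rewrite (top_pmul (N := m.-1) (K := -1) _ vB); [|by rewrite -hm1|lia].
  by rewrite tA tB hWm1 hV2c mul1r mulr1.
- move=> k hk; rewrite /Theta /sadd.
  have hWz : (size W)%:Z <= m%:Z + 1 by rewrite hWsz; lia.
  rewrite (vab_pmul (N := m%:Z) (K := -2) hWz vA _ (k0 := m%:Z - 2)) //.
  have hVz : (size (2%:R *: V))%:Z <= m%:Z - 1 + 1 by move: hV2sz; lia.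
  by rewrite (vab_pmul (N := m%:Z - 1) (K := -1) hVz vB _ (k0 := m%:Z - 2)) ?addr0 //; lia.
- rewrite /Omega /sadd /sscale /=.
  rewrite (top_pmul (N := m) (K := -1) _ vY); [|by rewrite hWsz|lia].
  rewrite (top_pmul (N := m.-1) (K := 0) _ vZ); [|by rewrite -hm1|lia].
  by rewrite hWm1 mul1r tY mulrCA tZ mulr1 hVc.
- move=> k hk; rewrite /Omega /sadd /sscale /=.
  have hWz : (size W)%:Z <= m%:Z + 1 by rewrite hWsz; lia.
  rewrite (vab_pmul (N := m%:Z) (K := -1) hWz vY _ (k0 := m%:Z - 1)) //.
  have hVz : (size V)%:Z <= m%:Z - 1 + 1 by move: hVsz; lia.
  by rewrite (vab_pmul (N := m%:Z - 1) (K := 0) hVz vZ _ (k0 := m%:Z - 1)) ?mulr0 ?addr0 //; lia.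
Qed.
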